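(* Let $E_{\mathcal H}>1$ be a fixed real number. Each of the following kernels satisfies assumptions (K0), (K1), (K2), (K3): (a) the Gaussian kernel $K(x)=e^{-x^2/2}/\sqrt{2\pi}$; (b) the rectangular kernel $K(x)=\mathbf 1_{[-1,1]}(x)/2$; (c) the Epanechnikov kernel $K(x)=(3/4)(1-x^2)\mathbf 1_{[-1,1]}(x)$; (d) the biweight kernel $K(x)=(15/16)(1-x^2)^2\mathbf 1_{[-1,1]}(x)$.
   Context: $\|\cdot\|$ and $\langle\cdot,\cdot\rangle$ denote the $L^2(\mathbb R)$ norm and inner product with respect to Lebesgue measure; $K(x\,\cdot)$ denotes $u\mapsto K(xu)$. For $x>0$ define $\phi(x)=1+\frac1x-2\frac{\langle K,K(x\,\cdot)\rangle}{\|K\|^2}$ (equivalently $\phi(x)=\|K\|^{-2}\|K-K_x\|^2$ with $K_x=K(\cdot/x)/x$). The assumptions are: (K0) $\int|K|=1$, $\|K\|<\infty$, and $\langle K,K(x\,\cdot)\rangle/\|K\|^2\ge1$ for all $0\le x\le1$; (K1) the function $\phi$ is bounded from below over $[E_{\mathcal H},+\infty)$; (K2) for every $0<\mu<1$, the function $x\mapsto\phi(x)-\mu/x$ tends to $+\infty$ as $x\to0$ and is decreasing in some neighborhood of $0$; (K3) for every $0<\mu<1$, the function $x\mapsto\phi(x)+\mu/x$ is increasing on $[2,\infty)$. *)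

(* Defs.v *)
From HB Require Import structures.
From mathcomp Require Import all_boot all_order all_algebra.
From mathcomp Require Import all_classical all_reals all_analysis.
Set Implicit Arguments. Unset Strict Implicit. Unset Printing Implicit Defensive.
Import Order.TTheory GRing.Theory Num.Theory.
Import numFieldNormedType.Exports.
Local Open Scope classical_set_scope.
Local Open Scope ring_scope.

Section Kernels.
Variable R : realType.

Definition L2inner (f g : R -> R) : R :=
  Rintegral (@lebesgue_measure R) setT (fun u => f u * g u).

Definition L2norm2 (K : R -> R) : R := L2inner K K.

Definition phi (K : R -> R) (x : R) : R :=
  1 + x^-1 - 2 * (L2inner K (fun u => K (x * u)) / L2norm2 K).

Definition assumption_K0 (K : R -> R) : Prop :=
  [/\ (\int[@lebesgue_measure R]_u (`|K u|)%:E = 1)%E,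
      (\int[@lebesgue_measure R]_u ((K u) ^+ 2)%:E < +oo)%E &
      forall x : R, 0 <= x <= 1 ->
        1 <= L2inner K (fun u => K (x * u)) / L2norm2 K].

Definition assumption_K1 (EH : R) (K : R -> R) : Prop :=
  exists m : R, forall x : R, EH <= x -> m <= phi K x.

Definition assumption_K2 (K : R -> R) : Prop :=
  forall mu : R, 0 < mu < 1 ->
    (phi K x - mu / x) @[x --> 0^'+] --> +oo /\
    exists2 d : R, 0 < d &
      forall x y : R, 0 < x -> x < y -> y < d ->
        phi K y - mu / y < phi K x - mu / x.

Definition assumption_K3 (K : R -> R) : Prop :=
  forall mu : R, 0 < mu < 1 ->
    forall x y : R, 2 <= x -> x < y ->
      phi K x + mu / x < phi K y + mu / y.

Definition kernel_assumptions (EH : R) (K : R -> R) : Prop :=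
  [/\ assumption_K0 K, assumption_K1 EH K, assumption_K2 K & assumption_K3 K].

Definition gaussian_kernel (x : R) : R :=
  expR (- (x ^+ 2) / 2) / Num.sqrt (2 * pi).

Definition rectangular_kernel (x : R) : R :=
  if `|x| <= 1 then 2^-1 else 0.

Definition epanechnikov_kernel (x : R) : R :=
  if `|x| <= 1 then 3 / 4 * (1 - x ^+ 2) else 0.

Definition biweight_kernel (x : R) : R :=
  if `|x| <= 1 then 15 / 16 * (1 - x ^+ 2) ^+ 2 else 0.

End Kernels.

(* Main.v *)
Require Import Defs.
From HB Require Import structures.
From mathcomp Require Import all_boot all_order all_algebra.
From mathcomp Require Import all_classical all_reals all_analysis.
From mathcomp Require Import ring lra measurable_realfun normal_distribution gauss_integral.
Import Order.TTheory GRing.Theory Num.Theory.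
Import numFieldNormedType.Exports.
Local Open Scope classical_set_scope.
Local Open Scope ring_scope.

Section S.
Variable R : realType.
Notation mu := (@lebesgue_measure R).

Lemma ftc_symE (f q F : R -> R) (a : R) : 0 < a ->
  (forall x, is_derive x (1:R) F (q x)) -> (forall x, derivable q x 1) ->
  (forall u, `|u| <= a -> f u = q u) ->
  (forall u, a < `|u| -> f u = 0) ->
  (\int[mu]_u (f u)%:E = (F a - F (- a))%:E)%E.
Proof.
move=> a0 dF dq fq f0.
have cq : continuous q.
  move=> x; apply: differentiable_continuous.
  by apply/derivable1_diffP; apply: dq.
have -> : (\int[mu]_u (f u)%:E = \int[mu]_(u in `[(- a)%R, a]) (q u)%:E)%E.
  rewrite [RHS]integral_mkcond; apply: eq_integral => u _.
  rewrite /patch; case: ifPn => [|/negP]; rewrite inE /= in_itv /=.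
    by move=> /andP[h1 h2]; rewrite fq // ler_norml h1 h2.
  move=> h; rewrite f0 //; rewrite ltNge ler_norml; apply/negP => h'; exact: h h'.
rewrite (@continuous_FTC2 _ q F) //.
- lra.
- by apply: continuous_subspaceT.
- split.
  + by move=> x _; apply: ex_derive.
  + apply: cvg_at_right_filter; apply: differentiable_continuous.
    by apply/derivable1_diffP; apply: ex_derive.
  + apply: cvg_at_left_filter; apply: differentiable_continuous.
    by apply/derivable1_diffP; apply: ex_derive.
- by move=> x _; rewrite derive1E derive_val.
Qed.

Lemma ftc_sym (f q F : R -> R) (a : R) : 0 < a ->
  (forall x, is_derive x (1:R) F (q x)) -> (forall x, derivable q x 1) ->
  (forall u, `|u| <= a -> f u = q u) ->
  (forall u, a < `|u| -> f u = 0) ->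
  Rintegral mu setT f = F a - F (- a).
Proof. by move=> *; rewrite /Rintegral (@ftc_symE f q F a). Qed.

Section PolyKernel.
Variables (p K : R -> R).
Hypothesis HK : forall u, K u = if `|u| <= 1 then p u else 0.

Lemma inner_le1 x (F : R -> R) : 0 <= x <= 1 ->
  (forall y, is_derive y (1:R) F (p y * p (x * y))) ->
  (forall y, derivable (fun u => p u * p (x * u)) y 1) ->
  L2inner K (fun u => K (x * u)) = F 1 - F (- 1).
Proof.
move=> /andP[x0 x1] dF dq; rewrite /L2inner.
apply: (@ftc_sym _ (fun u => p u * p (x * u))) => // u hu.
  rewrite !HK hu normrM (ger0_norm x0).
  have -> : x * `|u| <= 1 by rewrite -[1]mul1r ler_pM.
  done.
by rewrite HK leNgt hu /= mul0r.
Qed.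

Lemma inner_ge1 x (F : R -> R) : 1 <= x ->
  (forall y, is_derive y (1:R) F (p y * p (x * y))) ->
  (forall y, derivable (fun u => p u * p (x * u)) y 1) ->
  L2inner K (fun u => K (x * u)) = F x^-1 - F (- x^-1).
Proof.
move=> x1 dF dq; rewrite /L2inner.
have x0 : 0 < x by lra.
apply: (@ftc_sym _ (fun u => p u * p (x * u))) => //.
- by rewrite invr_gt0.
- move=> u hu; rewrite !HK normrM (gtr0_norm x0).
  have -> : x * `|u| <= 1.
    by rewrite -(mulfV (lt0r_neq0 x0)) ler_pM2l.
  have -> : `|u| <= 1.
    by apply: (le_trans hu); rewrite invr_le1 ?unitf_gt0.
  done.
- move=> u hu; rewrite !HK normrM (gtr0_norm x0).
  have -> : x * `|u| <= 1 = false.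
    apply/negbTE; rewrite -ltNge.
    by rewrite -(mulfV (lt0r_neq0 x0)) ltr_pM2l.
  by rewrite mulr0.
Qed.

Lemma int_abs (F : R -> R) : (forall u, `|u| <= 1 -> 0 <= p u) ->
  (forall y, is_derive y (1:R) F (p y)) -> (forall y, derivable p y 1) ->
  (\int[mu]_u (`|K u|)%:E = (F 1 - F (- 1))%:E)%E.
Proof.
move=> p0 dF dp; apply: (@ftc_symE _ p) => // u hu.
  by rewrite HK hu ger0_norm // p0.
by rewrite HK leNgt hu /= normr0.
Qed.

Lemma int_sq (F : R -> R) :
  (forall y, is_derive y (1:R) F (p y ^+ 2)) -> (forall y, derivable (fun u => p u ^+ 2) y 1) ->
  (\int[mu]_u ((K u) ^+ 2)%:E = (F 1 - F (- 1))%:E)%E.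
Proof.
move=> dF dp; apply: (@ftc_symE _ (fun u => p u ^+ 2)) => // u hu.
  by rewrite HK hu.
by rewrite HK leNgt hu /= expr0n.
Qed.

End PolyKernel.

Definition pE (u : R) := 3 / 4 * (1 - u ^+ 2).
Lemma HE u : epanechnikov_kernel u = if `|u| <= 1 then pE u else 0.
Proof. by []. Qed.

Ltac solve_der := move=> ?; apply: trigger_derive; rewrite /GRing.scale/= /GRing.scale/=; field.

Lemma epan_le1 x : 0 <= x <= 1 ->
  L2inner (@epanechnikov_kernel R) (fun u => epanechnikov_kernel (x * u)) = 3/4 - 3/20 * x ^+ 2.
Proof.
move=> hx.
pose F := (fun u : R => 9/16 * (u - (1 + x^+2) * u^+3 / 3 + x^+2 * u^+5 / 5)).
have dF : forall y, is_derive y (1:R) F (pE y * pE (x * y)) by rewrite /F /pE; solve_der.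
have dq : forall y, derivable (fun u => pE u * pE (x * u)) y 1.
  by move=> y; rewrite /pE; apply: ex_derive.
rewrite (@inner_le1 pE _ HE x F hx dF dq) /F; by field.
Qed.

Lemma K2gen (f h : R -> R) (c L C : R) : 0 < c -> 0 <= L ->
  (forall x, 0 < x <= 1 -> f x = c / x + h x) ->
  (forall x y, 0 < x -> x < y -> y <= 1 -> h y - h x <= L * (y - x)) ->
  (forall x, 0 < x <= 1 -> - C <= h x) ->
  f x @[x --> 0^'+] --> +oo /\
  exists2 d : R, 0 < d & forall x y, 0 < x -> x < y -> y < d -> f y < f x.
Proof.
move=> c0 L0 fE hL hC; split.
  apply/cvgryPge => A.
  pose M := `|A| + `|C| + 1.
  have M0 : 0 < M by rewrite /M; have := normr_ge0 A; have := normr_ge0 C; lra.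
  near=> y.
  have y0 : 0 < y by near: y; exact: nbhs_right_gt.
  have y1 : y <= 1 by near: y; apply: nbhs_right_ltW; exact: ltr01.
  have yM : y < c / M by near: y; apply: nbhs_right_lt; exact: divr_gt0.
  rewrite fE ?y0 //.
  have h1 : M < c / y.
    by rewrite ltr_pdivlMr // mulrC -ltr_pdivlMr.
  have h2 := hC y; rewrite y0 y1 /= in h2; have h3 := h2 isT.
  have := ler_norm A; have := ler_norm C; rewrite /M in h1; lra.
pose d := c / (L + 1 + c).
have d0 : 0 < d by rewrite /d divr_gt0 //; lra.
have d1 : d < 1 by rewrite /d ltr_pdivrMr; lra.
have dc : d * (L + 1) <= c.
  rewrite /d mulrAC ler_pdivrMr; last by lra.
  by rewrite ler_pM2l //; lra.
exists d => // x y x0 xy yd.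
have y0 : 0 < y by lra.
rewrite !fE; [|lra..].
have hxy := hL x y x0 xy (ltW (lt_trans yd d1)).
have xy1 : x * y < d * d by apply: ltr_pM; lra.
have dd : d * d <= d * 1 by rewrite ler_pM2l //; lra.
have P : L * (x * y) * (y - x) < c * (y - x).
  rewrite ltr_pM2r; last by lra.
  have a1 : (L + 1) * (x * y) < (L + 1) * (d * d) by rewrite ltr_pM2l //; lra.
  have a2 : (L + 1) * (d * d) <= (L + 1) * (d * 1) by rewrite ler_pM2l //; lra.
  have xy0 : 0 < x * y by apply: mulr_gt0.
  lra.
have E : c / x - c / y = c * (y - x) / (x * y) by field; apply/andP; split; lra.
have : L * (y - x) < c * (y - x) / (x * y).
  rewrite ltr_pdivlMr; last exact: mulr_gt0.
  by rewrite -mulrA [(y - x) * _]mulrC mulrA.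
lra.
Unshelve. all: end_near.
Qed.

Lemma inv2 (x y : R) : 2 <= x -> x < y -> [/\ 0 < y^-1, y^-1 < x^-1 & x^-1 <= 2^-1].
Proof.
move=> x2 xy.
have x0 : 0 < x by lra.
have y0 : 0 < y by lra.
split; first by rewrite invr_gt0.
  by rewrite ltf_pV2 ?posrE.
by rewrite lef_pV2 ?posrE //; lra.
Qed.

Lemma sq_le1 (u : R) : `|u| <= 1 -> u ^+ 2 <= 1.
Proof. move=> h; rewrite -(real_normK (num_real u)); have := normr_ge0 u; nra. Qed.

Lemma L2norm2E (K : R -> R) : L2norm2 K = L2inner K (fun u => K (1 * u)).
Proof. by rewrite /L2norm2; congr L2inner; apply: funext => u; rewrite mul1r. Qed.

Lemma epan_ge1 (x : R) : 1 <= x ->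
  L2inner (@epanechnikov_kernel R) (fun u => epanechnikov_kernel (x * u)) =
  3/4 * x^-1 - 3/20 * x^-1 ^+ 3.
Proof.
move=> hx.
have x0 : x != 0 by apply/lt0r_neq0; lra.
pose F := (fun u : R => 9/16 * (u - (1 + x^+2) * u^+3 / 3 + x^+2 * u^+5 / 5)).
have dF : forall y, is_derive y (1:R) F (pE y * pE (x * y)) by rewrite /F /pE; solve_der.
have dq : forall y, derivable (fun u => pE u * pE (x * u)) y 1.
  by move=> y; rewrite /pE; apply: ex_derive.
by rewrite (@inner_ge1 pE _ HE x F hx dF dq) /F; field.
Qed.

Lemma epan_N : L2norm2 (@epanechnikov_kernel R) = 3/5.
Proof. rewrite L2norm2E epan_le1; [by field| by rewrite ler01 lexx]. Qed.

Lemma epan_phi_le1 (x : R) : 0 < x <= 1 ->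
  phi (@epanechnikov_kernel R) x = x^-1 - 3/2 + x^+2 / 2.
Proof.
move=> /andP[x0 x1]; rewrite /phi epan_N epan_le1; last by rewrite (ltW x0) x1.
by field; exact: lt0r_neq0.
Qed.

Lemma epan_phi_ge1 (x : R) : 1 <= x ->
  phi (@epanechnikov_kernel R) x = 1 - 3/2 * x^-1 + 1/2 * x^-1 ^+ 3.
Proof.
move=> x1; rewrite /phi epan_N epan_ge1 //.
by field; apply: lt0r_neq0; lra.
Qed.

Lemma epan_assum (EH : R) : 1 < EH -> kernel_assumptions EH (@epanechnikov_kernel R).
Proof.
move=> hEH; split.
- split.
  + pose F := fun u : R => 3/4 * (u - u ^+ 3 / 3).
    have dF : forall y, is_derive y (1:R) F (pE y) by rewrite /F /pE; solve_der.
    have dq : forall y, derivable pE y 1 by move=> y; rewrite /pE; apply: ex_derive.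
    rewrite (@int_abs pE _ HE F _ dF dq); first by congr EFin; rewrite /F; field.
    move=> u; rewrite /pE => hu; apply: mulr_ge0 => //.
    by rewrite subr_ge0 sq_le1.
  + pose F := fun u : R => 9/16 * (u - 2 * u ^+ 3 / 3 + u ^+ 5 / 5).
    have dF : forall y, is_derive y (1:R) F (pE y ^+ 2) by rewrite /F /pE; solve_der.
    have dq : forall y, derivable (fun u => pE u ^+ 2) y 1.
      by move=> y; rewrite /pE; apply: ex_derive.
    by rewrite (@int_sq pE _ HE F dF dq) ltry.
  + move=> x hx; rewrite epan_N epan_le1 //.
    move: hx => /andP[x0 x1].
    have : x ^+ 2 <= 1 by rewrite -(expr1n _ 2) ler_pXn2r ?nnegrE.
    move=> h; rewrite ler_pdivlMr; lra.
- exists (-1) => x hx.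
  have x1 : 1 <= x by lra.
  rewrite epan_phi_ge1 //.
  have p0 : 0 < x^-1 by rewrite invr_gt0; lra.
  have p1 : x^-1 <= 1 by rewrite invr_le1 ?unitf_gt0 //; lra.
  have : 0 <= x^-1 ^+ 3 by rewrite exprn_ge0 // ltW.
  lra.
- move=> mu /andP[mu0 mu1].
  apply: (@K2gen _ (fun x => -3/2 + x ^+ 2 / 2) (1 - mu) 1 (3/2)).
  + lra.
  + lra.
  + move=> x /andP[x0 x1]; rewrite epan_phi_le1 ?x0 ?x1 //.
    by field; apply: lt0r_neq0.
  + move=> x y x0 xy y1.
    have : (y - x) * (y + x) <= (y - x) * 2 by rewrite ler_pM2l; lra.
    lra.
  + move=> x /andP[x0 x1]; have := sqr_ge0 x; lra.
- move=> mu /andP[mu0 mu1] x y x2 xy.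
  rewrite !epan_phi_ge1; [|lra|lra].
  have [q0 qp p2] := @inv2 x y x2 xy.
  set p := x^-1 in qp p2 *; set q := y^-1 in q0 qp *.
  have h1 : p ^+ 2 + p * q + q ^+ 2 <= 3/4 by nra.
  have h2 : 0 < (p - q) * ((3/2 - mu) - (p ^+ 2 + p * q + q ^+ 2) / 2).
    apply: mulr_gt0; lra.
  have E : p ^+ 3 - q ^+ 3 = (p - q) * (p ^+ 2 + p * q + q ^+ 2) by ring.
  nra.
Qed.

Definition pR (u : R) : R := 2^-1.
Lemma HR u : rectangular_kernel u = if `|u| <= 1 then pR u else 0.
Proof. by []. Qed.

Lemma rect_le1 (x : R) : 0 <= x <= 1 ->
  L2inner (@rectangular_kernel R) (fun u => rectangular_kernel (x * u)) = 1/2.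
Proof.
move=> hx.
pose F := (fun u : R => u / 4).
have dF : forall y, is_derive y (1:R) F (pR y * pR (x * y)) by rewrite /F /pR; solve_der.
have dq : forall y, derivable (fun u => pR u * pR (x * u)) y 1.
  by move=> y; rewrite /pR; apply: ex_derive.
by rewrite (@inner_le1 pR _ HR x F hx dF dq) /F; field.
Qed.

Lemma rect_ge1 (x : R) : 1 <= x ->
  L2inner (@rectangular_kernel R) (fun u => rectangular_kernel (x * u)) = 1/2 * x^-1.
Proof.
move=> hx.
have x0 : x != 0 by apply/lt0r_neq0; lra.
pose F := (fun u : R => u / 4).
have dF : forall y, is_derive y (1:R) F (pR y * pR (x * y)) by rewrite /F /pR; solve_der.
have dq : forall y, derivable (fun u => pR u * pR (x * u)) y 1.
  by move=> y; rewrite /pR; apply: ex_derive.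
by rewrite (@inner_ge1 pR _ HR x F hx dF dq) /F; field.
Qed.

Lemma rect_N : L2norm2 (@rectangular_kernel R) = 1/2.
Proof. rewrite L2norm2E rect_le1; [by [] | by rewrite ler01 lexx]. Qed.

Lemma rect_phi_le1 (x : R) : 0 < x <= 1 ->
  phi (@rectangular_kernel R) x = x^-1 - 1.
Proof.
move=> /andP[x0 x1]; rewrite /phi rect_N rect_le1; last by rewrite (ltW x0) x1.
by field; apply: lt0r_neq0; lra.
Qed.

Lemma rect_phi_ge1 (x : R) : 1 <= x ->
  phi (@rectangular_kernel R) x = 1 - x^-1.
Proof.
move=> x1; rewrite /phi rect_N rect_ge1 //.
by field; apply: lt0r_neq0; lra.
Qed.

Lemma rect_assum (EH : R) : 1 < EH -> kernel_assumptions EH (@rectangular_kernel R).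
Proof.
move=> hEH; split.
- split.
  + pose F := fun u : R => u / 2.
    have dF : forall y, is_derive y (1:R) F (pR y) by rewrite /F /pR; solve_der.
    have dq : forall y, derivable pR y 1 by move=> y; rewrite /pR; apply: ex_derive.
    rewrite (@int_abs pR _ HR F _ dF dq); first by congr EFin; rewrite /F; field.
    by move=> u; rewrite /pR => hu.
  + pose F := fun u : R => u / 4.
    have dF : forall y, is_derive y (1:R) F (pR y ^+ 2) by rewrite /F /pR; solve_der.
    have dq : forall y, derivable (fun u => pR u ^+ 2) y 1.
      by move=> y; rewrite /pR; apply: ex_derive.
    by rewrite (@int_sq pR _ HR F dF dq) ltry.
  + move=> x hx; rewrite rect_N rect_le1 //.
    by rewrite divff.
- exists (-1) => x hx.
  have x1 : 1 <= x by lra.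
  rewrite rect_phi_ge1 //.
  have p1 : x^-1 <= 1 by rewrite invr_le1 ?unitf_gt0 //; lra.
  lra.
- move=> mu /andP[mu0 mu1].
  apply: (@K2gen _ (fun x => -1) (1 - mu) 1 1).
  + lra.
  + lra.
  + move=> x /andP[x0 x1]; rewrite rect_phi_le1 ?x0 ?x1 //.
    by field; apply: lt0r_neq0.
  + move=> x y x0 xy y1; lra.
  + move=> x /andP[x0 x1]; lra.
- move=> mu /andP[mu0 mu1] x y x2 xy.
  rewrite !rect_phi_ge1; [|lra|lra].
  have [q0 qp p2] := @inv2 x y x2 xy.
  set p := x^-1 in qp p2 *; set q := y^-1 in q0 qp *.
  nra.
Qed.

Definition pB (u : R) := 15 / 16 * (1 - u ^+ 2) ^+ 2.
Lemma HB u : biweight_kernel u = if `|u| <= 1 then pB u else 0.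
Proof. by []. Qed.

Definition FB (x u : R) := 225/256 * (u - (2 + 2 * x^+2) * u^+3 / 3
  + (1 + 4 * x^+2 + x^+4) * u^+5 / 5 - (2 * x^+2 + 2 * x^+4) * u^+7 / 7 + x^+4 * u^+9 / 9).

Lemma biw_le1 (x : R) : 0 <= x <= 1 ->
  L2inner (@biweight_kernel R) (fun u => biweight_kernel (x * u)) =
  15/16 - 15/56 * x^+2 + 5/112 * x^+4.
Proof.
move=> hx.
have dF : forall y, is_derive y (1:R) (FB x) (pB y * pB (x * y)) by rewrite /FB /pB; solve_der.
have dq : forall y, derivable (fun u => pB u * pB (x * u)) y 1.
  by move=> y; rewrite /pB; apply: ex_derive.
by rewrite (@inner_le1 pB _ HB x (FB x) hx dF dq) /FB; field.
Qed.

Lemma biw_ge1 (x : R) : 1 <= x ->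
  L2inner (@biweight_kernel R) (fun u => biweight_kernel (x * u)) =
  15/16 * x^-1 - 15/56 * x^-1^+3 + 5/112 * x^-1^+5.
Proof.
move=> hx.
have x0 : x != 0 by apply/lt0r_neq0; lra.
have dF : forall y, is_derive y (1:R) (FB x) (pB y * pB (x * y)) by rewrite /FB /pB; solve_der.
have dq : forall y, derivable (fun u => pB u * pB (x * u)) y 1.
  by move=> y; rewrite /pB; apply: ex_derive.
by rewrite (@inner_ge1 pB _ HB x (FB x) hx dF dq) /FB; field.
Qed.

Lemma biw_N : L2norm2 (@biweight_kernel R) = 5/7.
Proof. rewrite L2norm2E biw_le1; [by field| by rewrite ler01 lexx]. Qed.

Lemma biw_phi_le1 (x : R) : 0 < x <= 1 ->
  phi (@biweight_kernel R) x = 1 + x^-1 - (21 - 6 * x^+2 + x^+4) / 8.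
Proof.
move=> /andP[x0 x1]; rewrite /phi biw_N biw_le1; last by rewrite (ltW x0) x1.
by field; apply: lt0r_neq0; lra.
Qed.

Lemma biw_phi_ge1 (x : R) : 1 <= x ->
  phi (@biweight_kernel R) x = 1 - 13/8 * x^-1 + 3/4 * x^-1^+3 - 1/8 * x^-1^+5.
Proof.
move=> x1; rewrite /phi biw_N biw_ge1 //.
by field; apply: lt0r_neq0; lra.
Qed.

Lemma biw_assum (EH : R) : 1 < EH -> kernel_assumptions EH (@biweight_kernel R).
Proof.
move=> hEH; split.
- split.
  + pose F := fun u : R => 15/16 * (u - 2 * u ^+ 3 / 3 + u ^+ 5 / 5).
    have dF : forall y, is_derive y (1:R) F (pB y) by rewrite /F /pB; solve_der.
    have dq : forall y, derivable pB y 1 by move=> y; rewrite /pB; apply: ex_derive.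
    rewrite (@int_abs pB _ HB F _ dF dq); first by congr EFin; rewrite /F; field.
    move=> u; rewrite /pB => hu; apply: mulr_ge0 => //; exact: sqr_ge0.
  + pose F := fun u : R => 225/256 * (u - 4 * u ^+ 3 / 3 + 6 * u ^+ 5 / 5 - 4 * u ^+ 7 / 7 + u ^+ 9 / 9).
    have dF : forall y, is_derive y (1:R) F (pB y ^+ 2) by rewrite /F /pB; solve_der.
    have dq : forall y, derivable (fun u => pB u ^+ 2) y 1.
      by move=> y; rewrite /pB; apply: ex_derive.
    by rewrite (@int_sq pB _ HB F dF dq) ltry.
  + move=> x hx; rewrite biw_N biw_le1 //.
    move: hx => /andP[x0 x1].
    have h : x ^+ 2 <= 1 by rewrite sq_le1 // ger0_norm.
    have h0 : 0 <= x ^+ 2 by exact: sqr_ge0.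
    have E : x ^+ 4 = x ^+ 2 * x ^+ 2 by rewrite -exprD.
    rewrite ler_pdivlMr; last by [].
    rewrite E; nra.
- exists (-1) => x hx.
  have x1 : 1 <= x by lra.
  rewrite biw_phi_ge1 //.
  have p0 : 0 < x^-1 by rewrite invr_gt0; lra.
  have p1 : x^-1 <= 1 by rewrite invr_le1 ?unitf_gt0 //; lra.
  have : 0 <= x^-1 ^+ 3 by rewrite exprn_ge0 // ltW.
  have : x^-1 ^+ 5 <= 1 by rewrite exprn_ile1 // ltW.
  lra.
- move=> mu /andP[mu0 mu1].
  apply: (@K2gen _ (fun x => 1 - (21 - 6 * x^+2 + x^+4) / 8) (1 - mu) 2 2).
  + lra.
  + lra.
  + move=> x /andP[x0 x1]; rewrite biw_phi_le1 ?x0 ?x1 //.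
    by field; apply: lt0r_neq0.
  + move=> x y x0 xy y1.
    have a1 : 0 <= (y - x) * (y + x) by apply: mulr_ge0; lra.
    have a2 : (y - x) * (y + x) <= (y - x) * 2 by rewrite ler_pM2l; lra.
    have a3 : 0 <= x ^+ 2 + y ^+ 2 by have := sqr_ge0 x; have := sqr_ge0 y; lra.
    have E : 6 * y ^+ 2 - y ^+ 4 - (6 * x ^+ 2 - x ^+ 4) =
      ((y - x) * (y + x)) * (6 - (x ^+ 2 + y ^+ 2)) by ring.
    have a4 : x ^+ 2 + y ^+ 2 <= 2.
      have hx2 : x ^+ 2 <= 1 by apply: sq_le1; rewrite ger0_norm; lra.
      have hy2 : y ^+ 2 <= 1 by apply: sq_le1; rewrite ger0_norm; lra.
      lra.
    have : ((y - x) * (y + x)) * (6 - (x ^+ 2 + y ^+ 2)) <= ((y - x) * (y + x)) * 6.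
      by apply: ler_wpM2l => //; lra.
    nra.
  + move=> x /andP[x0 x1].
    have h : x ^+ 4 <= 1 by rewrite exprn_ile1 // ltW.
    have := sqr_ge0 x; lra.
- move=> mu /andP[mu0 mu1] x y x2 xy.
  rewrite !biw_phi_ge1; [|lra|lra].
  have [q0 qp p2] := @inv2 x y x2 xy.
  set p := x^-1 in qp p2 *; set q := y^-1 in q0 qp *.
  have h1 : p ^+ 2 + p * q + q ^+ 2 <= 3/4 by nra.
  have h5 : 0 <= p ^+ 4 + p ^+ 3 * q + p ^+ 2 * q ^+ 2 + p * q ^+ 3 + q ^+ 4.
    have ? : 0 < p by lra.
    by rewrite !addr_ge0 // ?mulr_ge0 // ?exprn_ge0 //; lra.
  have h2 : 0 < (p - q) * ((13/8 - mu) - 3/4 * (p ^+ 2 + p * q + q ^+ 2)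
        + 1/8 * (p ^+ 4 + p ^+ 3 * q + p ^+ 2 * q ^+ 2 + p * q ^+ 3 + q ^+ 4)).
    apply: mulr_gt0; lra.
  nra.
Qed.

End S.

Section S2.
Variable R : realType.
Notation mu := (@lebesgue_measure R).

Lemma alg (a u : R) : a != 0 -> - (a * u^+2)/2 = - u^+2/(a^-1 *+ 2).
Proof. by move=> a0; rewrite -mulr_natr; field. Qed.

Lemma alg2 (a : R) : a != 0 -> a^-1 * pi *+ 2 = 2 * pi / a.
Proof. by move=> a0; rewrite -mulr_natr; field. Qed.

Lemma gint (a : R) : 0 < a ->
  (\int[mu]_u (expR (- (a * u ^+ 2) / 2))%:E = (Num.sqrt (2 * pi / a))%:E)%E.
Proof.
move=> a0.
pose s := Num.sqrt (a^-1).
have s0 : 0 < s by rewrite /s sqrtr_gt0 invr_gt0.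
have s2 : s ^+ 2 = a^-1 by rewrite /s sqr_sqrtr // invr_ge0 ltW.
have H := @integral_normal_pdf R 0 s.
rewrite /normal_pdf (negbTE (lt0r_neq0 s0)) in H.
have {}H : (\int[mu]_x ((normal_peak s)%:E * (normal_fun 0 s x)%:E) = 1)%E.
  by rewrite -H; apply: eq_integral => x _; rewrite EFinM.
rewrite ge0_integralZl_EFin //= in H; last 3 first.
- by move=> x _; rewrite lee_fin normal_fun_ge0.
- by apply/measurable_EFinP; exact: measurable_normal_fun.
- exact: normal_peak_ge0.
have -> : (\int[mu]_u (expR (- (a * u ^+ 2) / 2))%:E =
    \int[mu]_x (normal_fun 0 s x)%:E)%E.
  apply: eq_integral => u _; congr EFin; rewrite /normal_fun subr0 s2; congr expR.
  by apply: alg; apply: lt0r_neq0.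
have k0 := normal_peak_gt0 (lt0r_neq0 s0).
have I0 : (0 <= \int[mu]_x (normal_fun 0 s x)%:E)%E.
  by apply: integral_ge0 => x _; rewrite lee_fin normal_fun_ge0.
move: (\int[mu]_x (normal_fun 0 s x)%:E)%E H I0 => I H I0.
case: I H I0 => [r| |] H I0.
- rewrite -EFinM in H; case: H => H.
  have -> : r = (normal_peak s)^-1 by apply: (mulfI (lt0r_neq0 k0)); rewrite H mulfV // lt0r_neq0.
  rewrite /normal_peak invrK s2 alg2 //; exact: lt0r_neq0.
- by rewrite mulry gtr0_sg // mul1e in H.
- by [].
Qed.

Lemma gfun_eq (a : R) : 0 < a ->
  (fun u => expR (- (a * u ^+ 2) / 2)) = normal_fun 0 (Num.sqrt a^-1).
Proof.
move=> a0; apply: funext => u.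
rewrite /normal_fun subr0 sqr_sqrtr ?invr_ge0 ?(ltW a0) //.
by rewrite alg //; apply: lt0r_neq0.
Qed.

Lemma gintZ (c a : R) : 0 <= c -> 0 < a ->
  (\int[mu]_u (c * expR (- (a * u ^+ 2) / 2))%:E = (c * Num.sqrt (2 * pi / a))%:E)%E.
Proof.
move=> c0 a0.
have -> : (\int[mu]_u (c * expR (- (a * u ^+ 2) / 2))%:E =
    \int[mu]_u (c%:E * (expR (- (a * u ^+ 2) / 2))%:E))%E.
  by apply: eq_integral => u _; rewrite EFinM.
rewrite ge0_integralZl_EFin //=.
- by rewrite gint // -EFinM.
- apply/measurable_EFinP; rewrite (@gfun_eq a a0).
  exact: measurable_normal_fun.
Qed.

Lemma gprod (x u : R) : gaussian_kernel u * gaussian_kernel (x * u) =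
  (2 * pi)^-1 * expR (- ((1 + x ^+ 2) * u ^+ 2) / 2).
Proof.
rewrite /gaussian_kernel.
have p0 : 0 < 2 * pi :> R by rewrite mulr_gt0 // pi_gt0.
have S : Num.sqrt (2 * pi) * Num.sqrt (2 * pi) = 2 * pi :> R.
  by rewrite -expr2 sqr_sqrtr // ltW.
have Sn : Num.sqrt (2 * pi) != 0 :> R by rewrite sqrtr_eq0 -ltNge.
have E : - ((1 + x ^+ 2) * u ^+ 2) / 2 = - u ^+ 2 / 2 + - ((x * u) ^+ 2) / 2 :> R.
  by rewrite exprMn; field.
rewrite E expRD.
set t := Num.sqrt (2 * pi).
by rewrite -S invfM mulrACA mulrC.
Qed.

Lemma gauss_inner (x : R) :
  L2inner (@gaussian_kernel R) (fun u => gaussian_kernel (x * u)) =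
  (2 * pi)^-1 * Num.sqrt (2 * pi / (1 + x ^+ 2)).
Proof.
rewrite /L2inner /Rintegral.
have -> : (\int[mu]_u (gaussian_kernel u * gaussian_kernel (x * u))%:E =
    \int[mu]_u ((2 * pi)^-1 * expR (- ((1 + x ^+ 2) * u ^+ 2) / 2))%:E)%E.
  by apply: eq_integral => u _; rewrite gprod.
rewrite gintZ //.
- by rewrite invr_ge0 mulr_ge0 // pi_ge0.
- by have := sqr_ge0 x; lra.
Qed.

Definition sg (x : R) := Num.sqrt (2 / (1 + x ^+ 2)).

Lemma pos1 (x : R) : 0 < 1 + x ^+ 2.
Proof. by have := sqr_ge0 x; lra. Qed.

Lemma pos1W (x : R) : 0 <= 1 + x ^+ 2.
Proof. exact: ltW (pos1 x). Qed.

Lemma sg_sq (x : R) : sg x ^+ 2 = 2 / (1 + x ^+ 2).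
Proof. by rewrite /sg sqr_sqrtr // divr_ge0 //; apply: pos1W. Qed.

Lemma sg_ge0 (x : R) : 0 <= sg x.
Proof. exact: sqrtr_ge0. Qed.

Lemma gauss_N : L2norm2 (@gaussian_kernel R) = (2 * pi)^-1 * Num.sqrt pi.
Proof.
rewrite L2norm2E gauss_inner; congr (_ * Num.sqrt _).
by rewrite expr1n; field.
Qed.

Lemma canc (t a b : R) : t != 0 -> b != 0 -> t * (a * b) / (t * b) = a.
Proof. by move=> *; field; apply/andP. Qed.

Lemma gauss_ratio (x : R) :
  L2inner (@gaussian_kernel R) (fun u => gaussian_kernel (x * u)) / L2norm2 (@gaussian_kernel R) = sg x.
Proof.
rewrite gauss_N gauss_inner.
have -> : 2 * pi / (1 + x ^+ 2) = 2 / (1 + x ^+ 2) * pi :> R by rewrite mulrAC.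
rewrite sqrtrM; last by rewrite divr_ge0 //; apply: pos1W.
have p0 : 0 < pi :> R by exact: pi_gt0.
have s0 : Num.sqrt pi != 0 :> R by rewrite sqrtr_eq0 -ltNge.
have t0 : (2 * pi)^-1 != 0 :> R by rewrite invr_eq0 mulf_neq0 // lt0r_neq0.
rewrite /sg; set a := Num.sqrt _; set b := Num.sqrt pi.
by apply: canc.
Qed.

Lemma gauss_phi (x : R) : phi (@gaussian_kernel R) x = 1 + x^-1 - 2 * sg x.
Proof. by rewrite /phi gauss_ratio. Qed.

Lemma key (x y A B r : R) : 0 < x -> 0 < y -> 0 < A -> 0 < B ->
  A ^+ 2 = 1 + x ^+ 2 -> B ^+ 2 = 1 + y ^+ 2 -> x < y ->
  A * B * (A + B) <= r * (x * y * (x + y)) -> x^-1 - y^-1 <= r / A - r / B.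
Proof.
move=> x0 y0 A0 B0 hA hB xy hD.
have e1 : r / A - r / B = r * (B ^+ 2 - A ^+ 2) / (A * B * (A + B)).
  have nA : A != 0 by apply: lt0r_neq0.
  have nB : B != 0 by apply: lt0r_neq0.
  have nAB : A + B != 0 by apply: lt0r_neq0; lra.
  by field; rewrite nA nB nAB.
have e2 : x^-1 - y^-1 = (y - x) / (x * y).
  by field; apply/andP; split; apply: lt0r_neq0.
have D0 : 0 < A * B * (A + B) by rewrite !mulr_gt0 //; lra.
have E0 : 0 < x * y by rewrite mulr_gt0.
rewrite e1 e2 hA hB ler_pdivrMr // mulrAC ler_pdivlMr //.
have yx : 0 <= y - x by lra.
have := ler_wpM2l yx hD.
lra.
Qed.

Lemma sg_ge1 (x : R) : 0 <= x <= 1 -> 1 <= sg x.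
Proof.
move=> /andP[x0 x1].
have h : x ^+ 2 <= 1 by apply: sq_le1; rewrite ger0_norm.
rewrite /sg -[leLHS]sqrtr1 ler_sqrt; last by rewrite divr_ge0 //; apply: pos1W.
by rewrite ler_pdivlMr; [lra | apply: pos1].
Qed.

Lemma sg_le2 (x : R) : sg x <= 2.
Proof.
have h := sg_sq x; have h0 := sg_ge0 x.
have : 2 / (1 + x ^+ 2) <= 2.
  by rewrite ler_pdivrMr; [have := sqr_ge0 x; lra | apply: pos1].
timeout 15 nra.
Qed.

Lemma fe (x s m : R) : x != 0 -> 1 + x^-1 - 2 * s - m / x = (1 - m) / x + (1 - 2 * s).
Proof. by move=> x0; field. Qed.

Lemma sq_diff (x y : R) : 0 <= x -> x <= y ->
  2 / (1 + x ^+ 2) - 2 / (1 + y ^+ 2) <= 2 * (y ^+ 2 - x ^+ 2).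
Proof.
move=> x0 xy.
have hx := pos1 x; have hy := pos1 y.
have e : 2 / (1 + x ^+ 2) - 2 / (1 + y ^+ 2) =
  2 * (y ^+ 2 - x ^+ 2) / ((1 + x ^+ 2) * (1 + y ^+ 2)).
  by field; rewrite !lt0r_neq0.
have P : 0 < (1 + x ^+ 2) * (1 + y ^+ 2) by apply: mulr_gt0.
rewrite e ler_pdivrMr //.
have d : 0 <= y ^+ 2 - x ^+ 2 by rewrite subr_ge0 ler_pXn2r ?nnegrE //; lra.
have g : 1 <= (1 + x ^+ 2) * (1 + y ^+ 2).
  have := sqr_ge0 x; have := sqr_ge0 y; timeout 15 nra.
timeout 15 nra.
Qed.

Lemma A_le (x : R) : 2 <= x -> Num.sqrt (1 + x ^+ 2) <= Num.sqrt 5 / 2 * x.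
Proof.
move=> x2.
have s5 : Num.sqrt 5 ^+ 2 = 5 :> R by rewrite sqr_sqrtr.
have s50 : 0 <= Num.sqrt 5 :> R by exact: sqrtr_ge0.
have x0 : 0 <= Num.sqrt 5 / 2 * x by apply: mulr_ge0; [apply: divr_ge0|lra].
have : Num.sqrt (1 + x ^+ 2) <= Num.sqrt ((Num.sqrt 5 / 2 * x) ^+ 2).
  rewrite ler_sqrt; last exact: sqr_ge0.
  have -> : (Num.sqrt 5 / 2 * x) ^+ 2 = Num.sqrt 5 ^+ 2 / 4 * x ^+ 2 by field.
  rewrite s5; timeout 15 nra.
by rewrite sqrtr_sqr ger0_norm.
Qed.

Lemma c3_le : (Num.sqrt 5 / 2) ^+ 3 <= Num.sqrt 2 :> R.
Proof.
have s5 : Num.sqrt 5 ^+ 2 = 5 :> R by rewrite sqr_sqrtr.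
have s50 : 0 <= Num.sqrt 5 :> R by exact: sqrtr_ge0.
have a0 : 0 <= (Num.sqrt 5 / 2) ^+ 3 :> R by apply: exprn_ge0; apply: divr_ge0.
rewrite -(@ler_pXn2r _ 2) ?nnegrE ?sqrtr_ge0 //.
rewrite sqr_sqrtr // -exprM.
have -> : (Num.sqrt 5 / 2) ^+ (3 * 2) = (Num.sqrt 5 ^+ 2) ^+ 3 / 64 :> R.
  by rewrite -exprM /=; field.
rewrite s5; lra.
Qed.

Lemma sg_eq (x : R) : sg x = Num.sqrt 2 / Num.sqrt (1 + x ^+ 2).
Proof. by rewrite /sg sqrtrM // sqrtrV //; apply: pos1W. Qed.

Lemma sg_K3 (x y : R) : 2 <= x -> x < y -> x^-1 - y^-1 <= sg x - sg y.
Proof.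
move=> x2 xy.
rewrite !sg_eq.
set A := Num.sqrt (1 + x ^+ 2); set B := Num.sqrt (1 + y ^+ 2).
have A0 : 0 < A by rewrite sqrtr_gt0; apply: pos1.
have B0 : 0 < B by rewrite sqrtr_gt0; apply: pos1.
have hA : A ^+ 2 = 1 + x ^+ 2 by rewrite sqr_sqrtr //; apply: pos1W.
have hB : B ^+ 2 = 1 + y ^+ 2 by rewrite sqr_sqrtr //; apply: pos1W.
apply: key => //; try lra.
have Ax := @A_le x x2.
have By := @A_le y (ltW (le_lt_trans x2 xy)).
rewrite -/A in Ax; rewrite -/B in By.
set c := Num.sqrt 5 / 2 in Ax By *.
have c0 : 0 <= c by apply: divr_ge0 => //; exact: sqrtr_ge0.
have h1 : A * B <= (c * x) * (c * y) by apply: ler_pM; lra.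
have h2 : A + B <= c * (x + y) by lra.
have h3 : A * B * (A + B) <= (c * x) * (c * y) * (c * (x + y)).
  by apply: ler_pM => //; [apply: mulr_ge0; lra | lra].
have h4 := c3_le; rewrite -/c in h4.
have h5 : 0 <= x * y * (x + y) by apply: mulr_ge0; [apply: mulr_ge0|]; lra.
have h6 : c ^+ 3 * (x * y * (x + y)) <= Num.sqrt 2 * (x * y * (x + y)).
  by apply: ler_wpM2r.
have e : (c * x) * (c * y) * (c * (x + y)) = c ^+ 3 * (x * y * (x + y)).
  by ring.
lra.
Qed.

Lemma gauss_assum (EH : R) : 1 < EH -> kernel_assumptions EH (@gaussian_kernel R).
Proof.
move=> hEH.
have p0 : 0 < 2 * pi :> R by rewrite mulr_gt0 // pi_gt0.
have Sn : Num.sqrt (2 * pi) != 0 :> R by rewrite sqrtr_eq0 -ltNge.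
split.
- split.
  + have -> : (\int[mu]_u (`|gaussian_kernel u|)%:E =
      \int[mu]_u ((Num.sqrt (2 * pi))^-1 * expR (- (1 * u ^+ 2) / 2))%:E)%E.
      apply: eq_integral => u _; congr EFin.
      rewrite ger0_norm; last by rewrite /gaussian_kernel divr_ge0 // ?expR_ge0 ?sqrtr_ge0.
      by rewrite /gaussian_kernel mul1r mulrC.
    rewrite gintZ ?invr_ge0 ?sqrtr_ge0 ?ltr01 //.
    by rewrite divr1 mulVf.
  + have -> : (\int[mu]_u ((gaussian_kernel u) ^+ 2)%:E =
      \int[mu]_u ((2 * pi)^-1 * expR (- ((1 + 1 ^+ 2) * u ^+ 2) / 2))%:E)%E.
      by apply: eq_integral => u _; rewrite -gprod mul1r expr2.
    have a2 : 0 < 1 + 1 ^+ 2 :> R by rewrite expr1n; lra.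
    by rewrite gintZ ?invr_ge0 ?(ltW p0) // ltry.
  + by move=> x hx; rewrite gauss_ratio; apply: sg_ge1.
- exists (-3) => x hx.
  rewrite gauss_phi.
  have : 0 <= x^-1 by rewrite invr_ge0; lra.
  have := sg_le2 x; lra.
- move=> m /andP[m0 m1].
  apply: (@K2gen R _ (fun x => 1 - 2 * sg x) (1 - m) 4 3).
  + lra.
  + lra.
  + move=> x /andP[x0 x1]; rewrite gauss_phi fe //; exact: lt0r_neq0.
  + move=> x y x0 xy y1.
    have a1 := @sg_ge1 x ltac:(apply/andP; split; lra).
    have b1 := @sg_ge1 y ltac:(apply/andP; split; lra).
    have d := @sq_diff x y ltac:(lra) ltac:(lra).
    rewrite -!sg_sq in d.
    have e : y ^+ 2 - x ^+ 2 <= 2 * (y - x).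
      have : (y - x) * (y + x) <= (y - x) * 2 by rewrite ler_pM2l; lra.
      have E : y ^+ 2 - x ^+ 2 = (y - x) * (y + x) by ring.
      lra.
    timeout 15 nra.
  + move=> x _; have := sg_le2 x; lra.
- move=> m /andP[m0 m1] x y x2 xy.
  rewrite !gauss_phi.
  have k := @sg_K3 x y x2 xy.
  have [q0 qp p2] := @inv2 R x y x2 xy.
  set p := x^-1 in k qp p2 *; set q := y^-1 in k q0 qp *.
  have h : m * (p - q) < 1 * (p - q) by rewrite ltr_pM2r //; lra.
  lra.
Qed.
End S2.

Theorem lemma4 (R : realType) (EH : R) (hEH : 1 < EH) :
  [/\ kernel_assumptions EH (@gaussian_kernel R),
      kernel_assumptions EH (@rectangular_kernel R),
      kernel_assumptions EH (@epanechnikov_kernel R) &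
      kernel_assumptions EH (@biweight_kernel R)].
Proof.
split; [apply: gauss_assum | apply: rect_assum | apply: epan_assum | apply: biw_assum]; exact: hEH.
Qed.
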